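(* Let $G$ be a finite abelian group and let $n \in \mathbb{N}$. Let \[m= \max \{ \lfloor \lfloor \mathsf{D}(G\oplus C_n)/n \rfloor n/2 \rfloor,\ \lfloor \mathsf{D}(G)/n \rfloor n \}.\] Then $\mathsf{s}_{\le m} ( G )\le \mathsf{D} ( G \oplus C_n )$.
   Context: A sequence over a finite abelian group $H$ is a finite unordered list of elements of $H$ with repetitions; zero-sum means its terms sum to $0$. $\mathsf{D}(H)$ (the Davenport constant) is the smallest $\ell$ such that every sequence over $H$ of length at least $\ell$ has a non-empty zero-sum subsequence. For $m\in\mathbb{N}$, $\mathsf{s}_{\le m}(H)\in\mathbb{N}\cup\{\infty\}$ is the smallest $\ell$ such that every sequence over $H$ of length at least $\ell$ has a non-empty zero-sum subsequence of length at most $m$. $C_n$ is a cyclic group of order $n$. *)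

(* Defs.v *)
From HB Require Import structures.
From mathcomp Require Import all_boot all_algebra.
Set Implicit Arguments. Unset Strict Implicit. Unset Printing Implicit Defensive.
Import GRing.Theory.
Local Open Scope ring_scope.

(* Sequences over an additive abelian group H are represented by [seq H];
   "unordered" is harmless since the notions below are permutation invariant.
   A subsequence (sub-multiset) of s is any t with [subseq t s]. *)

Definition has_zs_sub_le (H : zmodType) (m : nat) (s : seq H) : Prop :=
  exists t : seq H, [/\ subseq t s, (0 < size t)%N, (size t <= m)%N
                      & \sum_(x <- t) x = 0].

Definition has_zs_sub (H : zmodType) (s : seq H) : Prop :=
  exists t : seq H, [/\ subseq t s, (0 < size t)%N & \sum_(x <- t) x = 0].

Definition is_least (P : nat -> Prop) (l : nat) : Prop :=
  P l /\ forall k, P k -> (l <= k)%N.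

Definition is_davenport (H : zmodType) (d : nat) : Prop :=
  is_least (fun l => forall s : seq H, (l <= size s)%N -> has_zs_sub s) d.

(* l = s_{<= m}(H), when this is finite; s_{<= m}(H) = oo iff no such l *)
Definition is_s_le (H : zmodType) (m l : nat) : Prop :=
  is_least (fun l => forall s : seq H, (l <= size s)%N -> has_zs_sub_le m s) l.

(* Main.v *)
Require Import Defs.
From mathcomp Require Import all_boot all_algebra.
From Stdlib Require Import Classical.
Import GRing.Theory.

Lemma least_exists (P : nat -> Prop) k : P k -> exists l, is_least P l.
Proof.
elim: k {-2}k (leqnn k) => [|K IH] k Hk Pk.
  exists k; split=> // j _; by move: Hk; rewrite leqn0 => /eqP->.
case: (classic (exists j, (j < k)%N /\ P j)) => [[j [Hj Pj]]|H].
  apply: (IH j) => //; rewrite -ltnS; exact: leq_trans Hj Hk.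
exists k; split=> // j Pj; rewrite leqNgt; apply/negP => Hj; apply: H; by exists j.
Qed.

Lemma mask_compl (H : zmodType) (m : bitseq) (s : seq H) : size m = size s ->
  (size (mask m s) + size (mask (map negb m) s) = size s)%N /\
  (\sum_(x <- mask m s) x + \sum_(x <- mask (map negb m) s) x = \sum_(x <- s) x)%R.
Proof.
elim: s m => [|x s IH] [|b m] //=; first by rewrite !big_nil addr0.
move=> [] /IH [E1 E2]; case: b => /=; rewrite !big_cons /=.
  by rewrite addSn E1; split=> //; rewrite -addrA E2.
by rewrite addnS E1; split=> //; rewrite addrCA E2.
Qed.

Lemma sum_map_pair (G : zmodType) p (t : seq G) :
  (\sum_(x <- map (fun g => (g, inZp 1 : 'I_p.+1)) t) x =
  (\sum_(x <- t) x, inZp (size t)))%R.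
Proof.
elim: t => [|x t IH]; first by rewrite !big_nil; congr pair; apply: val_inj.
rewrite /= !big_cons IH; congr pair; apply: val_inj => /=.
by rewrite modnDm.
Qed.

Theorem lemma3p4 (G : finZmodType) (n : nat) (hn : (0 < n)%N)
    (dG dGn : nat)
    (hdG : is_davenport G dG)
    (hdGn : is_davenport (G * 'I_(n.-1.+1))%type dGn) :
  let m := maxn ((dGn %/ n * n) %/ 2) (dG %/ n * n) in
  exists s : nat, is_s_le G m s /\ (s <= dGn)%N.
Proof.
move=> m.
suff HP : forall S : seq G, (dGn <= size S)%N -> has_zs_sub_le m S.
  have [l [Pl Ml]] := @least_exists (fun l => forall S : seq G, (l <= size S)%N -> has_zs_sub_le m S) _ HP.
  by exists l; split; [split|apply: Ml].
move=> S HS.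
set S0 := take dGn S.
have HS0 : size S0 = dGn by rewrite size_take_min; apply/minn_idPl.
have H1 : (dGn <= size (map (fun g => (g, inZp 1 : 'I_(n.-1.+1))) S0))%N by rewrite size_map HS0.
have [t' [st' t'pos t'sum]] := hdGn.1 _ H1.
move/subseqP: st' => [mk smk Et'].
rewrite -map_mask in Et'; subst t'.
set T := mask mk S0 in t'pos t'sum.
rewrite size_map in t'pos.
rewrite sum_map_pair in t'sum.
have Tsum : (\sum_(x <- T) x = 0)%R := congr1 fst t'sum.
have := congr1 (fun p => val p.2) t'sum => /=; rewrite prednK // => /eqP Tmod.
have sT : subseq T S by apply: subseq_trans (mask_subseq _ _) (take_subseq _ _).
have Tle : (size T <= dGn)%N by rewrite -HS0; apply: size_subseq; apply: mask_subseq.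
have Tn : (size T <= dGn %/ n * n)%N.
  by rewrite -(divnK Tmod) leq_mul2r leq_div2r ?orbT.
case: (classic (exists U, [/\ subseq U T, (0 < size U)%N, (size U < size T)%N
                            & (\sum_(x <- U) x = 0)%R])).
  move=> [U [/subseqP [mu smu EU] Upos Ult Usum]].
  have [E1 E2] := @mask_compl _ _ _ smu.
  rewrite -EU Usum Tsum add0r in E2.
  rewrite -EU in E1.
  case: (leqP (size U) (size (mask (map negb mu) T))) => Hc.
    exists U; split=> //; first by rewrite EU; apply: subseq_trans (mask_subseq _ _) sT.
    apply: leq_trans (leq_maxl _ _).
    apply: leq_trans (leq_div2r 2 Tn).
    rewrite leq_divRL // muln2 -addnn -E1; exact: leq_add.
  exists (mask (map negb mu) T); split=> //.
  - apply: subseq_trans (mask_subseq _ _) sT.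
  - by rewrite -(ltn_add2l (size U)) E1 addn0.
  - apply: leq_trans (leq_maxl _ _).
    apply: leq_trans (leq_div2r 2 Tn).
    rewrite leq_divRL // muln2 -addnn -E1; apply: leq_add => //; exact: ltnW.
move=> Hno.
exists T; split=> //.
apply: leq_trans (leq_maxr _ _).
have TdG : (size T <= dG)%N.
  rewrite leqNgt; apply/negP => Hlt.
  have H2 : (dG <= size (behead T))%N by rewrite size_behead -ltnS prednK.
  have [U [sU Upos Usum]] := hdG.1 _ H2.
  apply: Hno; exists U; split=> //.
    apply: subseq_trans sU _; case: (T) => //= x r; exact: subseq_cons.
  apply: leq_ltn_trans (size_subseq sU) _; rewrite size_behead prednK //.
by rewrite -(divnK Tmod) leq_mul2r leq_div2r ?orbT.
Qed.
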